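(* In the setting described in the context, suppose C(v), C(vi) and (U) hold. Then for any sequence of random variables $\{\alpha_n\}$ with $\alpha_n\xrightarrow{P}\alpha$ as $n\to\infty$, $d_H\big(D_n(\alpha_n\mid\mathbf{x}),D(\alpha\mid\mathbf{x})\big)\xrightarrow{P}0$ as $n\to\infty$.
   Context: Setting: $\mathbf{Y}$ is a random vector in $\mathbb{R}^p$ and $\mathbf{X}$ a random element of a complete separable metric space $\mathcal{C}$; $(\mathbf{X}_i,\mathbf{Y}_i)$ are i.i.d. copies; $\mu(\cdot\mid\mathbf{x})$ is the conditional distribution of $\mathbf{Y}$ given $\mathbf{X}=\mathbf{x}$ for a fixed $\mathbf{x}$, and $\mu_n(B\mid\mathbf{x})=\sum_{i=1}^nI(\mathbf{Y}_i\in B)W_{i,n}(\mathbf{x})$ with nonnegative weights summing to $1$ that are measurable functions of $\mathbf{X}_1,\dots,\mathbf{X}_n$. $\rho(\cdot\mid\mathbf{x})$ is a uniformly bounded conditional depth function associated with $\mu(\cdot\mid\mathbf{x})$, $\rho_n(\cdot\mid\mathbf{x})$ its sample version defined from $\mu_n(\cdot\mid\mathbf{x})$; $D(\alpha\mid\mathbf{x})=\{\mathbf{y}:\rho(\mathbf{y}\mid\mathbf{x})\ge\alpha\}$, $D_n(\alpha\mid\mathbf{x})=\{\mathbf{y}:\rho_n(\mathbf{y}\mid\mathbf{x})\ge\alpha\}$. A conditional median $\mathbf{m}(\mathbf{x})$ maximizes $\rho(\cdot\mid\mathbf{x})$. $d_H(A,B)=\inf\{\epsilon:A\subseteq B^\epsilon,B\subseteq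 A^\epsilon\}$ is the Hausdorff distance, $A^\epsilon$ the $\epsilon$-neighborhood of $A$. Conditions: (U) $\sup_{\mathbf{y}}|\rho_n(\mathbf{y}\mid\mathbf{x})-\rho(\mathbf{y}\mid\mathbf{x})|\xrightarrow{P}0$. C(v): $\rho(\cdot\mid\mathbf{x})$ is continuous and $\rho(\mathbf{y}\mid\mathbf{x})\to0$ as $\|\mathbf{y}\|\to\infty$. C(vi): for any $0<\alpha<\rho(\mathbf{m}(\mathbf{x})\mid\mathbf{x})$, the closure of $\{\mathbf{y}:\rho(\mathbf{y}\mid\mathbf{x})>\alpha\}$ equals $D(\alpha\mid\mathbf{x})$. *)

(* Defs.v *)
From HB Require Import structures.
From mathcomp Require Import all_boot all_order all_algebra.
From mathcomp Require Import all_classical all_reals all_analysis.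
Set Implicit Arguments. Unset Strict Implicit. Unset Printing Implicit Defensive.
Import Order.TTheory GRing.Theory Num.Theory.
Import numFieldNormedType.Exports.
Local Open Scope classical_set_scope.
Local Open Scope ring_scope.

Definition enorm (R : realType) (p : nat) (v : 'rV[R]_p) : R :=
  Num.sqrt (\sum_(i < p) v ord0 i ^+ 2).

Definition eps_nbhd (R : realType) (p : nat) (A : set 'rV[R]_p) (eps : R)
  : set 'rV[R]_p :=
  [set y | exists2 a, A a & enorm (y - a) < eps].

(* Hausdorff distance d_H(A,B) = inf {eps > 0 : A ⊆ B^eps, B ⊆ A^eps},
   extended-real valued (+oo when no such eps exists). *)
Definition hausdorff (R : realType) (p : nat) (A B : set 'rV[R]_p) : \bar R :=
  ereal_inf [set eps%:E | eps in
    [set eps : R | 0 < eps /\ A `<=` eps_nbhd B eps /\ B `<=` eps_nbhd A eps]].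

Definition level_set (R : realType) (p : nat) (rho : 'rV[R]_p -> R) (alpha : R)
  : set 'rV[R]_p := [set y | alpha <= rho y].

(* Outer probability P*(A) = inf {P(B) : B measurable, A ⊆ B}; it coincides
   with P on measurable events. *)
Definition outer_prob d (T : measurableType d) (R : realType)
  (P : probability T R) (A : set T) : \bar R :=
  ereal_inf [set P B | B in [set B | measurable B /\ A `<=` B]].

Definition cvg_in_prob d (T : measurableType d) (R : realType)
  (P : probability T R) (X : nat -> T -> R) (Y : T -> R) : Prop :=
  forall eps : R, 0 < eps ->
    (fun n => outer_prob P [set w | eps < `|X n w - Y w|]) @ \oo --> 0%E.

Definition cvg_in_prob0 d (T : measurableType d) (R : realType)
  (P : probability T R) (Z : nat -> T -> \bar R) : Prop :=
  forall eps : R, 0 < eps ->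
    (fun n => outer_prob P [set w | (eps%:E < Z n w)%E]) @ \oo --> 0%E.

Definition sup_dev (R : realType) (p : nat) (f g : 'rV[R]_p -> R) : \bar R :=
  ereal_sup [set (`|f y - g y|)%:E | y in [set: 'rV[R]_p]].

(* Main.v *)
Require Import Defs.
From HB Require Import structures.
From mathcomp Require Import all_boot all_order all_algebra.
From mathcomp Require Import all_classical all_reals all_analysis.
From mathcomp Require Import lra ring zify.
Import Order.TTheory GRing.Theory Num.Theory.
Import numFieldNormedType.Exports.
Local Open Scope classical_set_scope.
Local Open Scope ring_scope.
Section Geo.
Context (R : realType) (p : nat).
Implicit Types (v : 'rV[R]_p).

Lemma entry_le_mx v i : `|v ord0 i| <= `|v|.
Proof.
rewrite [leRHS]/Num.norm /= mx_normrE.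
exact: (le_bigmax 0 (fun ij : 'I_1 * 'I_p => `|v ij.1 ij.2|) (ord0, i)).
Qed.

Lemma mx_le_enorm v : `|v| <= enorm v.
Proof.
rewrite [leLHS]/Num.norm /= mx_normrE; apply: bigmax_le.
  exact: sqrtr_ge0.
move=> [i j] _ /=; rewrite (ord1 i) -sqrtr_sqr ler_sqrt; last first.
  by apply: sumr_ge0 => k _; rewrite sqr_ge0.
rewrite (bigD1 j) //= lerDl; by apply: sumr_ge0 => k _; rewrite sqr_ge0.
Qed.

Lemma enorm_lt v (e : R) : 0 < e -> `|v| < e / (p.+1)%:R -> enorm v < e.
Proof.
move=> e0 hv.
have hp : (0 < (p.+1)%:R :> R) by rewrite ltr0n.
have hs : \sum_(i < p) v ord0 i ^+ 2 <= p%:R * `|v| ^+ 2.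
  apply: (le_trans (y := \sum_(i < p) `|v| ^+ 2)); last first.
    by rewrite sumr_const card_ord mulr_natl.
  apply: ler_sum => i _.
  by rewrite -real_normK ?num_real // lerXn2r ?nnegrE ?normr_ge0 ?entry_le_mx.
have h2 : `|v| ^+ 2 <= (e / (p.+1)%:R) ^+ 2.
  by rewrite lerXn2r ?nnegrE ?normr_ge0 ?ltW // divr_gt0.
rewrite /enorm -(ger0_norm (ltW e0)) -sqrtr_sqr ltr_sqrt; last by rewrite exprn_gt0.
apply: (le_lt_trans hs); apply: (le_lt_trans (ler_wpM2l (ler0n _ _) h2)).
rewrite expr_div_n mulrA ltr_pdivrMr ?exprn_gt0 // mulrC ltr_pM2l ?exprn_gt0 //.
rewrite -natrX ltr_nat; lia.
Qed.

Lemma seq_min (I : eqType) (s : seq I) (g : I -> R) :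
  (forall i, i \in s -> 0 < g i) ->
  exists2 eta, 0 < eta & forall i, i \in s -> eta <= g i.
Proof.
elim: s => [|x s IH] h; first by exists 1 => //.
have [e e0 he] := IH (fun i hi => h i (ltac:(by rewrite inE hi orbT))).
have gx := h x (mem_head x s).
exists (Num.min (g x) e); first by rewrite lt_min gx e0.
move=> i; rewrite inE => /orP [/eqP ->|/he hi]; first by rewrite ge_min lexx.
by rewrite ge_min hi orbT.
Qed.

Variable rho : 'rV[R]_p -> R.
Hypothesis rho_cont : continuous rho.
Hypothesis rho_inf : forall e : R, 0 < e -> exists K : R, forall y, K < enorm y -> `|rho y| < e.

Lemma bnd (c : R) (A : set 'rV[R]_p) : 0 < c -> A `<=` [set y | c <= rho y] ->
  bounded_set A.
Proof.
move=> c0 hA; have [K hK] := rho_inf _ c0.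
exists K; split; first exact: num_real.
move=> M hM y /hA /= cy.
apply: (le_trans (mx_le_enorm y)); apply: ltW; apply: (le_lt_trans _ hM).
rewrite leNgt; apply/negP => /hK; rewrite ltNge => /negP; apply.
by rewrite (le_trans cy) // ler_norm.
Qed.

Lemma closed_sup (c : R) : closed [set y | c <= rho y].
Proof.
apply: (@preimage_closed _ _ rho [set x | c <= x]); last exact: closed_ge.
by move=> y _; apply: rho_cont.
Qed.

Lemma partB (alpha r : R) : 0 < alpha -> 0 < r ->
  closure [set y | alpha < rho y] = level_set rho alpha ->
  exists2 eta, 0 < eta & forall y, alpha <= rho y ->
    exists z, alpha + eta <= rho z /\ `|y - z| < r.
Proof.
move=> a0 r0 hcl.
have cD : compact (level_set rho alpha).
  apply: bounded_closed_compact; first by apply: (@bnd alpha _ a0).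
  rewrite -hcl; exact: closed_closure.
move: cD; rewrite compact_cover => /(_ _ [set z | alpha < rho z] (fun z => ball z r)).
case.
- by move=> z _; apply: ball_open.
- move=> y /=; rewrite -hcl => /(_ (ball y r) (@nbhsx_ballx _ _ y r r0)) [z [hz yz]].
  by exists z => //; apply: ball_sym.
move=> D' hD' hcov.
have [eta eta0 heta] := @seq_min _ (finmap.enum_fset D') (fun z => rho z - alpha)
  (fun z hz => ltac:(rewrite subr_gt0; have := hD' z hz; rewrite inE; exact)).
exists eta => // y ya.
have [z zD] := hcov y ya.
rewrite -ball_normE /= => hzy; exists z; split.
  by have := heta z zD; lra.
by rewrite distrC.
Qed.

Lemma partA (alpha r : R) : 0 < alpha -> 0 < r ->
  exists2 eta, 0 < eta & forall y, alpha - eta <= rho y ->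
    exists a, alpha <= rho a /\ `|y - a| < r.
Proof.
move=> a0 r0.
pose N := [set y : 'rV[R]_p | exists a, alpha <= rho a /\ `|y - a| < r].
have oN : open N.
  rewrite openE => y [a [ha hya]].
  have s0 : 0 < r - `|y - a| by rewrite subr_gt0.
  apply: (filterS _ (@nbhsx_ballx _ _ y _ s0)) => z.
  rewrite -ball_normE /= => hyz; exists a; split => //.
  have := ler_distD y z a; rewrite (distrC z y); lra.
pose S := [set y | alpha / 2 <= rho y] `&` ~` N.
have cS : compact S.
  apply: bounded_closed_compact.
    by apply: (@bnd (alpha / 2) _ _) => [|y []]; rewrite ?divr_gt0.
  exact: (closedI (closed_sup _) (open_closedC oN)).
move: cS; rewrite compact_cover => /(_ _ [set e : R | 0 < e] (fun e => [set y | rho y < alpha - e])).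
case.
- move=> e _; apply: (@open_comp _ _ rho [set x | x < alpha - e]).
    by move=> y _; apply: rho_cont.
  exact: open_lt.
- move=> y [ya /= ny].
  have hy : rho y < alpha.
    rewrite ltNge; apply/negP => h; apply: ny; exists y; split => //.
    by rewrite subrr normr0.
  exists ((alpha - rho y) / 2) => /=; first by rewrite divr_gt0 // subr_gt0.
  have := splitr (alpha - rho y); lra.
move=> D' hD' hcov.
have [e0 e00 he0] := @seq_min _ (finmap.enum_fset D') id
  (fun z hz => ltac:(have := hD' z hz; rewrite inE; exact)).
exists (Num.min e0 (alpha / 2)); first by rewrite lt_min e00 divr_gt0.
move=> y hy; case: (pselect (N y)) => // nN; exfalso.
have m1 : Num.min e0 (alpha / 2) <= e0 by rewrite ge_min lexx.
have m2 : Num.min e0 (alpha / 2) <= alpha / 2 by rewrite ge_min lexx orbT.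
have Sy : S y by split => //=; lra.
have [e eD /= he] := hcov y Sy.
have := he0 e eD; rewrite /=; lra.
Qed.
End Geo.
Section Prob.
Context d (T : measurableType d) (R : realType) (P : probability T R).
Local Open Scope ereal_scope.

Lemma op_ge0 A : 0 <= outer_prob P A.
Proof.
apply: le_ereal_inf_tmp => _ [B [mB _] <-]; exact: measure_ge0.
Qed.

Lemma op_fin A : outer_prob P A \is a fin_num.
Proof.
rewrite ge0_fin_numE ?op_ge0 //.
apply: (le_lt_trans (y := P setT)); last by rewrite probability_setT ltry.
by apply: ereal_inf_lbound; exists setT.
Qed.

Lemma op_sub A B C : A `<=` B `|` C ->
  outer_prob P A <= outer_prob P B + outer_prob P C.
Proof.
move=> ABC; apply/lee_addgt0Pr => e e0.
have e2 : (0 < e / 2)%R by rewrite divr_gt0.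
have [_ [B' [mB' BB'] <-] hB] := ereal_inf_lt (lte_spaddre (op_fin B) (y := (e/2)%:E)
    ltac:(by rewrite lte_fin) (lexx _)).
have [_ [C' [mC' CC'] <-] hC] := ereal_inf_lt (lte_spaddre (op_fin C) (y := (e/2)%:E)
    ltac:(by rewrite lte_fin) (lexx _)).
apply: (le_trans (y := P (B' `|` C'))).
  apply: ereal_inf_lbound; exists (B' `|` C') => //; split; first exact: measurableU.
  by move=> x /ABC [/BB'|/CC'] ?; [left|right].
apply: (le_trans (measureU2 _ mB' mC')).
apply: (le_trans (leeD (ltW hB) (ltW hC))).
rewrite -(fineK (op_fin B)) -(fineK (op_fin C)) -!EFinD lee_fin.
set b := fine _; set c := fine _; have := splitr e; lra.
Qed.

Lemma op_le A B : A `<=` B -> outer_prob P A <= outer_prob P B.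
Proof.
move=> AB; apply: le_ereal_inf_tmp => _ [B' [mB' BB'] <-].
by apply: ereal_inf_lbound; exists B'; split => //; apply: subset_trans BB'.
Qed.

Lemma op_cvg (As Bs Cs : nat -> set T) :
  (forall n, As n `<=` Bs n `|` Cs n) ->
  (fun n => outer_prob P (Bs n)) @ \oo --> 0 ->
  (fun n => outer_prob P (Cs n)) @ \oo --> 0 ->
  (fun n => outer_prob P (As n)) @ \oo --> 0.
Proof.
move=> h hB hC.
apply: (@squeeze_cvge _ _ _ _ (fun=> 0) _ (fun n => outer_prob P (Bs n) + outer_prob P (Cs n))).
- by near=> n; rewrite op_ge0 op_sub.
- exact: cvg_cst.
- by rewrite -(adde0 0); apply: cvgeD.
Unshelve. all: by end_near.
Qed.
End Prob.

Theorem lemma6 (d : measure_display) (Omega : measurableType d) (R : realType)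
  (P : probability Omega R) (p : nat)
  (rho : 'rV[R]_p -> R)                       (* rho(. | x), x fixed *)
  (rhon : nat -> Omega -> 'rV[R]_p -> R)      (* rho_n(. | x), random *)
  (m : 'rV[R]_p)                              (* conditional median m(x) *)
  (alpha : R) (alphan : nat -> Omega -> R) :
  (* rho is uniformly bounded *)
  (exists M : R, forall y, `|rho y| <= M) ->
  (* m(x) maximizes rho(. | x) *)
  (forall y, rho y <= rho m) ->
  (* C(v) *)
  continuous rho ->
  (forall e : R, 0 < e -> exists K : R, forall y, K < enorm y -> `|rho y| < e) ->
  (* C(vi) *)
  (forall a : R, 0 < a < rho m ->
     closure [set y | a < rho y] = level_set rho a) ->
  (* (U) *)
  cvg_in_prob0 P (fun n w => sup_dev (rhon n w) rho) ->
  (* alpha_n are random variables converging in probability to alpha *)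
  (forall n, measurable_fun [set: Omega] (alphan n)) ->
  cvg_in_prob P alphan (fun _ => alpha) ->
  0 < alpha < rho m ->
  cvg_in_prob0 P
    (fun n w => hausdorff (level_set (rhon n w) (alphan n w)) (level_set rho alpha)).
Proof.
move=> _ _ hcont hinf hcl hU _ hA /andP[a0 am] eps e0.
have hp : (0 < (p.+1)%:R :> R) by rewrite ltr0n.
pose r := eps / (p.+1)%:R.
have r0 : 0 < r by rewrite divr_gt0.
have [ea ea0 hea] := @partA R p rho hcont hinf alpha r a0 r0.
have [eb eb0 heb] := @partB R p rho hinf alpha r a0 r0 (hcl alpha (introT andP (conj a0 am))).
pose dl := Num.min ea eb / 2.
have m1 : Num.min ea eb <= ea by rewrite ge_min lexx.
have m2 : Num.min ea eb <= eb by rewrite ge_min lexx orbT.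
have dl0 : 0 < dl by rewrite divr_gt0 // lt_min ea0 eb0.
have dl2 : dl + dl = Num.min ea eb by rewrite /dl -splitr.
apply: (@op_cvg _ _ R P _ (fun n => [set w | (dl%:E < sup_dev (rhon n w) rho)%E])
               (fun n => [set w | dl < `|alphan n w - alpha|])); last 2 first.
- exact: hU.
- exact: hA.
move=> n w /= hH.
case: (pselect (dl%:E < sup_dev (rhon n w) rho)%E) => [h|h]; first by left.
case: (pselect (dl < `|alphan n w - alpha|)) => [h'|h']; first by right.
exfalso; move: hH; rewrite ltNge => /negP; apply.
have hs : forall y, `|rhon n w y - rho y| <= dl.
  move=> y; rewrite -lee_fin; apply: (le_trans (_ : _ <= sup_dev (rhon n w) rho)%E).
    by apply: ereal_sup_ubound; exists y.
  by rewrite leNgt; apply/negP.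
have ha : `|alphan n w - alpha| <= dl by rewrite leNgt; apply/negP.
move: ha; rewrite ler_norml => /andP [ha1 ha2].
apply: ereal_inf_lbound; exists eps => //; split; first by [].
split.
- move=> y /= hy.
  move: (hs y); rewrite ler_norml => /andP [h1 h2].
  have hy' : alpha - ea <= rho y.
    move: hy; rewrite /level_set /= => hy.
    lra.
  have [a [ha hya]] := hea y hy'.
  by exists a => //; apply: enorm_lt.
- move=> y /= hy.
  have [z [hz hyz]] := heb y hy.
  exists z; last by apply: enorm_lt.
  rewrite /level_set /=; move: (hs z); rewrite ler_norml => /andP [h1 h2]; lra.
Qed.
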